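(* If $T:\mathrm{PSym}(3)\to\mathrm{Sym}(3)$ satisfies Axioms (A0.1), (A0.2), (A0.3) and (A3), then it also satisfies Axioms (A1) and (A2).
   Context: $\mathrm{Sym}(3)$: real symmetric $3\times3$ matrices; $\mathrm{PSym}(3)$: symmetric positive definite ones; $\mathbb 1$: identity; $\mathrm{O}(3)$: orthogonal group; coaxial means commuting. Axiom (A0.1): $T$ continuous. Axiom (A0.2): $T(U)=0$ iff $U=\mathbb 1$. Axiom (A0.3): $T(Q^TUQ)=Q^TT(U)Q$ for all $Q\in\mathrm O(3)$, $U\in\mathrm{PSym}(3)$. Axiom (A1): for every $\alpha>0$ there is $s\in\mathbb R$ such that for all $U\in\mathrm{PSym}(3)$: $U=\mathrm{diag}(\alpha,\alpha^{-1},1)$ iff $T(U)=\mathrm{diag}(s,-s,0)$. Axiom (A2): for every $\lambda>0$ there is $a\in\mathbb R$ such that for all $U\in\mathrm{PSym}(3)$: $U=\lambda\mathbb 1$ iff $T(U)=a\mathbb 1$. Axiom (A3): $T(U_1U_2)=T(U_1)+T(U_2)$ for all coaxial $U_1,U_2\in\mathrm{PSym}(3)$. *)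

(* Defs.v *)
From Stdlib Require Import Reals.
Open Scope R_scope.

Inductive idx : Type := I0 | I1 | I2.

Definition Mat3 : Type := idx -> idx -> R.

Definition sum3 (f : idx -> R) : R := f I0 + f I1 + f I2.

Definition mmul (A B : Mat3) : Mat3 := fun i j => sum3 (fun k => A i k * B k j).
Definition madd (A B : Mat3) : Mat3 := fun i j => A i j + B i j.
Definition mtr (A : Mat3) : Mat3 := fun i j => A j i.
Definition mscal (a : R) : Mat3 := fun i j => match i, j with
  | I0, I0 | I1, I1 | I2, I2 => a | _, _ => 0 end.
Definition mid : Mat3 := mscal 1.
Definition mzero : Mat3 := fun _ _ => 0.
Definition mdiag (a b c : R) : Mat3 := fun i j => match i, j with
  | I0, I0 => a | I1, I1 => b | I2, I2 => c | _, _ => 0 end.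

Definition is_sym (A : Mat3) : Prop := forall i j, A i j = A j i.
Definition is_psym (A : Mat3) : Prop :=
  is_sym A /\
  forall x : idx -> R, (exists i, x i <> 0) ->
    sum3 (fun i => sum3 (fun j => x i * A i j * x j)) > 0.
Definition is_orth (Q : Mat3) : Prop := mmul (mtr Q) Q = mid.
(* coaxial = commuting *)
Definition coaxial (A B : Mat3) : Prop := mmul A B = mmul B A.

Definition mdist (A B : Mat3) : R :=
  sqrt (sum3 (fun i => sum3 (fun j => (A i j - B i j)^2))).

Definition cont_on_psym (T : Mat3 -> Mat3) : Prop :=
  forall U, is_psym U -> forall eps, eps > 0 -> exists delta, delta > 0 /\
    forall V, is_psym V -> mdist U V < delta -> mdist (T U) (T V) < eps.

Definition maps_into_sym (T : Mat3 -> Mat3) : Prop :=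
  forall U, is_psym U -> is_sym (T U).

Definition Ax0_1 (T : Mat3 -> Mat3) : Prop := cont_on_psym T.
Definition Ax0_2 (T : Mat3 -> Mat3) : Prop :=
  forall U, is_psym U -> (T U = mzero <-> U = mid).
Definition Ax0_3 (T : Mat3 -> Mat3) : Prop :=
  forall Q U, is_orth Q -> is_psym U ->
    T (mmul (mmul (mtr Q) U) Q) = mmul (mmul (mtr Q) (T U)) Q.
Definition Ax1 (T : Mat3 -> Mat3) : Prop :=
  forall alpha, alpha > 0 -> exists s : R, forall U, is_psym U ->
    (U = mdiag alpha (/ alpha) 1 <-> T U = mdiag s (- s) 0).
Definition Ax2 (T : Mat3 -> Mat3) : Prop :=
  forall lam, lam > 0 -> exists a : R, forall U, is_psym U ->
    (U = mscal lam <-> T U = mscal a).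
Definition Ax3 (T : Mat3 -> Mat3) : Prop :=
  forall U1 U2, is_psym U1 -> is_psym U2 -> coaxial U1 U2 ->
    T (mmul U1 U2) = madd (T U1) (T U2).

(* Main.v *)
Require Import Defs.
From Stdlib Require Import Reals Lra Psatz Classical FunctionalExtensionality.
Open Scope R_scope.

Ltac mext := apply functional_extensionality; intros []; apply functional_extensionality; intros [].
Ltac mun := unfold mmul, mtr, madd, mdiag, mscal, mid, mzero, sum3 in *; simpl in *.

Lemma mmul_assoc A B C : mmul (mmul A B) C = mmul A (mmul B C).
Proof. mext; mun; ring. Qed.
Lemma mmul_id_l A : mmul mid A = A.
Proof. mext; mun; ring. Qed.
Lemma mmul_id_r A : mmul A mid = A.
Proof. mext; mun; ring. Qed.

Lemma psym_diag a b c : a > 0 -> b > 0 -> c > 0 -> is_psym (mdiag a b c).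
Proof.
  intros. split. { intros i j; destruct i, j; reflexivity. }
  intros x [i Hi]. unfold sum3, mdiag; simpl.
  assert (0 <= x I0 * x I0) by nra. assert (0 <= x I1 * x I1) by nra. assert (0 <= x I2 * x I2) by nra.
  destruct i; [assert (0 < x I0 * x I0) by nra|assert (0 < x I1 * x I1) by nra|assert (0 < x I2 * x I2) by nra]; nra.
Qed.

Lemma mscal_diag l : mscal l = mdiag l l l.
Proof. mext; reflexivity. Qed.
Lemma mid_diag : mid = mdiag 1 1 1.
Proof. mext; reflexivity. Qed.

Lemma psym_pos U i : is_psym U -> U i i > 0.
Proof.
  intros [_ H].
  destruct i.
  - assert (H' := H (fun k => match k with I0 => 1 | _ => 0 end)).
    unfold sum3 in H'; simpl in H'. assert (HE : exists i, (match i with I0 => 1 | _ => 0 end) <> 0) by (exists I0; lra). specialize (H' HE); lra.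
  - assert (H' := H (fun k => match k with I1 => 1 | _ => 0 end)).
    unfold sum3 in H'; simpl in H'. assert (HE : exists i, (match i with I1 => 1 | _ => 0 end) <> 0) by (exists I1; lra). specialize (H' HE); lra.
  - assert (H' := H (fun k => match k with I2 => 1 | _ => 0 end)).
    unfold sum3 in H'; simpl in H'. assert (HE : exists i, (match i with I2 => 1 | _ => 0 end) <> 0) by (exists I2; lra). specialize (H' HE); lra.
Qed.
Lemma cub (c2 c1 c0 : R) : exists x, x*x*x + c2*x*x + c1*x + c0 = 0.
Proof.
  assert (hA : - Rabs c2 <= c2 <= Rabs c2) by (split_Rabs; lra).
  assert (hB : - Rabs c1 <= c1 <= Rabs c1) by (split_Rabs; lra).
  assert (hC : - Rabs c0 <= c0 <= Rabs c0) by (split_Rabs; lra).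
  set (A := Rabs c2) in *. set (B := Rabs c1) in *. set (C := Rabs c0) in *.
  set (K := 1 + A + B + C).
  assert (K1 : K >= 1) by (unfold K; lra).
  assert (KK : K*K >= K) by nra.
  assert (HK : A*K*K + B*K + C < K*K*K).
  { assert (B*K <= B*K*K) by nra. assert (C <= C*K*K) by nra.
    replace (K*K*K) with ((1+A+B+C)*K*K) by (unfold K; ring). nra. }
  set (p := fun x => x*x*x + c2*x*x + c1*x + c0).
  assert (h1 : p (-K) < 0).
  { unfold p. assert (c2*K*K <= A*K*K) by (apply Rmult_le_compat_r; nra).
    assert (-B*K <= c1*K ) by nra. nra. }
  assert (h2 : 0 < p K).
  { unfold p. assert (-A*K*K <= c2*K*K) by (apply Rmult_le_compat_r; nra).
    assert (-B*K <= c1*K ) by nra. nra. }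
  destruct (IVT p (-K) K) as [x [_ hx]]; try lra.
  - unfold p; reg.
  - exists x; exact hx.
Qed.
Lemma nz3 x y z : ~(x=0/\y=0/\z=0) -> (x<>0 \/ y<>0 \/ z<>0).
Proof. intro H. destruct (Req_dec x 0); destruct (Req_dec y 0); destruct (Req_dec z 0); tauto. Qed.

Ltac candv x y z := exists x, y, z; split; [apply nz3; assumption|]; repeat split; nra.

Lemma rowcase a b c d e f g h i :
  e*i-f*h = 0 -> f*g-d*i=0 -> d*h-e*g=0 ->
  b*i-c*h = 0 -> c*g-a*i=0 -> a*h-b*g=0 ->
  b*f-c*e = 0 -> c*d-a*f=0 -> a*e-b*d=0 ->
  ~(a=0/\b=0/\c=0) ->
  exists x y z, (x<>0 \/ y<>0 \/ z<>0) /\ a*x+b*y+c*z=0 /\ d*x+e*y+f*z=0 /\ g*x+h*y+i*z=0.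
Proof.
  intros. destruct (classic (a=0/\b=0)) as [[Ha Hb]|Hab].
  - assert (c<>0) by (intro; subst; tauto). exists 0, c, (-b). split; [right;left;auto|]. repeat split; nra.
  - exists b, (-a), 0. split. { destruct (Req_dec a 0); [left|right;left]; [tauto|lra]. }
    repeat split; nra.
Qed.

Lemma kern9 a b c d e f g h i : a*(e*i-f*h) - b*(d*i-f*g) + c*(d*h-e*g) = 0 ->
  exists x y z, (x<>0 \/ y<>0 \/ z<>0) /\ a*x+b*y+c*z=0 /\ d*x+e*y+f*z=0 /\ g*x+h*y+i*z=0.
Proof.
  intro D.
  destruct (classic (e*i-f*h = 0 /\ f*g-d*i=0 /\ d*h-e*g=0)) as [[Z1 [Z2 Z3]]|N].
  2: { candv (e*i-f*h) (f*g-d*i) (d*h-e*g). }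
  destruct (classic (b*i-c*h = 0 /\ c*g-a*i=0 /\ a*h-b*g=0)) as [[Y1 [Y2 Y3]]|N].
  2: { candv (b*i-c*h) (c*g-a*i) (a*h-b*g). }
  destruct (classic (b*f-c*e = 0 /\ c*d-a*f=0 /\ a*e-b*d=0)) as [[X1 [X2 X3]]|N].
  2: { candv (b*f-c*e) (c*d-a*f) (a*e-b*d). }
  destruct (classic (a=0/\b=0/\c=0)) as [[? [? ?]]|N].
  2: { apply rowcase; auto. }
  subst.
  destruct (classic (d=0/\e=0/\f=0)) as [[? [? ?]]|N].
  2: { destruct (rowcase d e f 0 0 0 g h i) as [x [y [z [? [? [? ?]]]]]]; try lra; auto.
       exists x, y, z; repeat split; auto; lra. }
  subst.
  destruct (classic (g=0/\h=0/\i=0)) as [[? [? ?]]|N].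
  2: { destruct (rowcase g h i 0 0 0 0 0 0) as [x [y [z [? [? [? ?]]]]]]; try lra; auto.
       exists x, y, z; repeat split; auto; lra. }
  subst. exists 1, 0, 0. split; [left; lra| lra].
Qed.
Lemma two (a b c : R) : b <> 0 -> exists m x y, x <> 0 /\ y <> 0 /\ a*x + b*y = m*x /\ b*x + c*y = m*y.
Proof.
  intro hb. set (t := sqrt (((a-c)/2)^2 + b^2)).
  assert (ht : t*t = ((a-c)/2)^2 + b^2) by (unfold t; apply sqrt_sqrt; apply Rplus_le_le_0_compat; apply pow2_ge_0).
  set (m := (a+c)/2 + t).
  assert (hm : b*b = (m-a)*(m-c)) by (unfold m; nra).
  exists m, b, (m-a). split; [auto|]. split.
  - intro E. rewrite E in hm. apply hb. nra.
  - split; [ring| nra].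
Qed.

Definition mv (U : Mat3) (v : idx -> R) (i : idx) : R := sum3 (fun k => U i k * v k).
Definition vec3 (x y z : R) : idx -> R := fun k => match k with I0 => x | I1 => y | I2 => z end.

Lemma eig3 (U : Mat3) : exists l v, (exists i, v i <> 0) /\ forall i, mv U v i = l * v i.
Proof.
  destruct (cub (-(U I0 I0 + U I1 I1 + U I2 I2))
    (U I0 I0 * U I1 I1 - U I0 I1 * U I1 I0 + U I0 I0 * U I2 I2 - U I0 I2 * U I2 I0 + U I1 I1 * U I2 I2 - U I1 I2 * U I2 I1)
    (-( U I0 I0 * (U I1 I1 * U I2 I2 - U I1 I2 * U I2 I1) - U I0 I1 * (U I1 I0 * U I2 I2 - U I1 I2 * U I2 I0)
       + U I0 I2 * (U I1 I0 * U I2 I1 - U I1 I1 * U I2 I0)))) as [l Hl].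
  destruct (kern9 (U I0 I0 - l) (U I0 I1) (U I0 I2) (U I1 I0) (U I1 I1 - l) (U I1 I2) (U I2 I0) (U I2 I1) (U I2 I2 - l))
    as [x [y [z [Hnz [E0 [E1 E2]]]]]].
  { lra. }
  exists l, (vec3 x y z). split.
  - destruct Hnz as [H|[H|H]]; [exists I0|exists I1|exists I2]; exact H.
  - intros []; unfold mv, vec3, sum3; simpl; lra.
Qed.

Lemma prod0l a b : a * b = 0 -> a <> 0 -> b = 0.
Proof. intros H Ha. destruct (Rmult_integral _ _ H); [contradiction|auto]. Qed.
Lemma prod0r a b : a * b = 0 -> b <> 0 -> a = 0.
Proof. intros H Ha. destruct (Rmult_integral _ _ H); [auto|contradiction]. Qed.

Definition coordP (U : Mat3) : Prop := forall l v, (exists i, v i <> 0) -> (forall i, mv U v i = l * v i) ->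
  v I0 * v I1 = 0 /\ v I0 * v I2 = 0 /\ v I1 * v I2 = 0.

Ltac rowof He k := let R := fresh "R" in pose proof (He k) as R; unfold mv, sum3 in R; simpl in R.

Lemma diag_of U : is_sym U -> coordP U -> U = mdiag (U I0 I0) (U I1 I1) (U I2 I2).
Proof.
  intros Hs HP.
  destruct (eig3 U) as [l [v [[k Hk] He]]].
  destruct (HP l v (ex_intro _ k Hk) He) as [P01 [P02 P12]].
  destruct k.
  - assert (v1 : v I1 = 0) by (exact (prod0l _ _ P01 Hk)).
    assert (v2 : v I2 = 0) by (exact (prod0l _ _ P02 Hk)).
    rowof He I1. rowof He I2. rewrite v1, v2 in *.
    assert (a : U I1 I0 = 0) by (apply (prod0r _ (v I0)); [lra|auto]).
    assert (b : U I2 I0 = 0) by (apply (prod0r _ (v I0)); [lra|auto]).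
    assert (c : U I1 I2 = 0).
    { destruct (Req_dec (U I1 I2) 0) as [|hb]; auto.
      destruct (two (U I1 I1) (U I1 I2) (U I2 I2) hb) as [m [x [y [hx [hy [e1 e2]]]]]].
      destruct (HP m (vec3 0 x y)) as [_ [_ Q]].
      + exists I1; exact hx.
      + intros []; unfold mv, vec3, sum3; simpl; rewrite ?(Hs I0 I1), ?(Hs I0 I2), ?(Hs I2 I1), ?a, ?b; first [lra | rewrite <- (Hs I1 I2); lra].
      + simpl in Q. destruct (Rmult_integral _ _ Q); contradiction. }
    mext; simpl; auto; rewrite ?(Hs I0 I1), ?(Hs I0 I2), ?(Hs I2 I1); auto.
  - assert (v0 : v I0 = 0) by (apply (prod0r _ _ P01 Hk)).
    assert (v2 : v I2 = 0) by (exact (prod0l _ _ P12 Hk)).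
    rowof He I0. rowof He I2. rewrite v0, v2 in *.
    assert (a : U I0 I1 = 0) by (apply (prod0r _ (v I1)); [lra|auto]).
    assert (b : U I2 I1 = 0) by (apply (prod0r _ (v I1)); [lra|auto]).
    assert (c : U I0 I2 = 0).
    { destruct (Req_dec (U I0 I2) 0) as [|hb]; auto.
      destruct (two (U I0 I0) (U I0 I2) (U I2 I2) hb) as [m [x [y [hx [hy [e1 e2]]]]]].
      destruct (HP m (vec3 x 0 y)) as [_ [Q _]].
      + exists I0; exact hx.
      + intros []; unfold mv, vec3, sum3; simpl; rewrite ?(Hs I1 I0), ?(Hs I1 I2), ?a, ?b; first [lra | rewrite <- (Hs I0 I2); lra].
      + simpl in Q. destruct (Rmult_integral _ _ Q); contradiction. }
    mext; simpl; auto; rewrite ?(Hs I1 I0), ?(Hs I2 I0), ?(Hs I1 I2); auto.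
  - assert (v0 : v I0 = 0) by (apply (prod0r _ _ P02 Hk)).
    assert (v1 : v I1 = 0) by (apply (prod0r _ _ P12 Hk)).
    rowof He I0. rowof He I1. rewrite v0, v1 in *.
    assert (a : U I0 I2 = 0) by (apply (prod0r _ (v I2)); [lra|auto]).
    assert (b : U I1 I2 = 0) by (apply (prod0r _ (v I2)); [lra|auto]).
    assert (c : U I0 I1 = 0).
    { destruct (Req_dec (U I0 I1) 0) as [|hb]; auto.
      destruct (two (U I0 I0) (U I0 I1) (U I1 I1) hb) as [m [x [y [hx [hy [e1 e2]]]]]].
      destruct (HP m (vec3 x y 0)) as [Q _].
      + exists I0; exact hx.
      + intros []; unfold mv, vec3, sum3; simpl; rewrite ?(Hs I2 I0), ?(Hs I2 I1), ?a, ?b; first [lra | rewrite <- (Hs I0 I1); lra].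
      + simpl in Q. destruct (Rmult_integral _ _ Q); contradiction. }
    mext; simpl; auto; rewrite ?(Hs I1 I0), ?(Hs I2 I0), ?(Hs I2 I1); auto.
Qed.

Definition nv (v : idx -> R) : R := sum3 (fun k => v k * v k).
Definition hh (v : idx -> R) : Mat3 := fun i j => mid i j - 2 * / nv v * (v i * v j).

Lemma nv_pos v : (exists i, v i <> 0) -> nv v > 0.
Proof.
  intros [i Hi]. unfold nv, sum3.
  assert (0 <= v I0 * v I0) by nra. assert (0 <= v I1 * v I1) by nra. assert (0 <= v I2 * v I2) by nra.
  destruct i; [assert (0 < v I0 * v I0) by nra|assert (0 < v I1 * v I1) by nra|assert (0 < v I2 * v I2) by nra]; lra.
Qed.

Lemma hh_sym v : mtr (hh v) = hh v.
Proof. mext; unfold hh, mtr; mun; ring. Qed.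

Lemma hh_orth v : nv v <> 0 -> mmul (hh v) (hh v) = mid.
Proof. intro hn. unfold nv in hn. mext; unfold hh, nv, mmul, sum3, mid, mscal in *; simpl; field; exact hn. Qed.

Lemma UH_e U v i j : mmul U (hh v) i j = U i j - 2 * / nv v * (mv U v i * v j).
Proof. destruct i, j; unfold mmul, hh, mv, sum3, mid, mscal; simpl; ring. Qed.

Lemma HU_e U v i j : is_sym U -> mmul (hh v) U i j = U i j - 2 * / nv v * (v i * mv U v j).
Proof. intro Hs. destruct i, j; unfold mmul, hh, mv, sum3, mid, mscal; simpl;
  rewrite ?(Hs I0 I1), ?(Hs I0 I2), ?(Hs I1 I2); ring. Qed.

Lemma hh_conj U v l : is_sym U -> (exists i, v i <> 0) -> (forall i, mv U v i = l * v i) ->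
  mmul (mmul (mtr (hh v)) U) (hh v) = U.
Proof.
  intros Hs Hnz He.
  assert (C : mmul U (hh v) = mmul (hh v) U).
  { apply functional_extensionality; intro i; apply functional_extensionality; intro j.
    rewrite UH_e, HU_e, !He by auto. ring. }
  assert (hn : nv v <> 0) by (pose proof (nv_pos v Hnz); lra).
  rewrite hh_sym, mmul_assoc, C, <- mmul_assoc, hh_orth, mmul_id_l by auto. reflexivity.
Qed.

Lemma hh_isorth v : (exists i, v i <> 0) -> is_orth (hh v).
Proof. intro Hnz. unfold is_orth. rewrite hh_sym. apply hh_orth. pose proof (nv_pos v Hnz); lra. Qed.

Lemma iso T Q U : Ax0_3 T -> is_orth Q -> is_psym U -> mmul (mmul (mtr Q) U) Q = U ->
  T U = mmul (mmul (mtr Q) (T U)) Q.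
Proof. intros H3 hQ hU E. rewrite <- (H3 Q U hQ hU), E. reflexivity. Qed.

Lemma key T U s : Ax0_3 T -> is_psym U -> T U = mdiag s (-s) 0 -> s <> 0 ->
  U = mdiag (U I0 I0) (U I1 I1) (U I2 I2).
Proof.
  intros H3 hU HT hs. apply diag_of; [apply hU|].
  intros l v Hnz He.
  set (H := hh v).
  assert (E := iso T H U H3 (hh_isorth v Hnz) hU (hh_conj U v l (proj1 hU) Hnz He)).
  rewrite HT in E. unfold H in E. rewrite hh_sym in E.
  assert (E2 : mmul (hh v) (mdiag s (-s) 0) = mmul (mdiag s (-s) 0) (hh v)).
  { rewrite E at 1. rewrite <- !mmul_assoc, hh_orth, mmul_id_l; [reflexivity|].
    pose proof (nv_pos v Hnz); lra. }
  assert (hn : / nv v <> 0) by (apply Rinv_neq_0_compat; pose proof (nv_pos v Hnz); lra).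
  pose proof (f_equal (fun M => M I0 I1) E2) as e01.
  pose proof (f_equal (fun M => M I0 I2) E2) as e02.
  pose proof (f_equal (fun M => M I1 I2) E2) as e12.
  unfold mmul, hh, mdiag, sum3, mid, mscal in e01, e02, e12; simpl in e01, e02, e12.
  assert (q01 : s * (/ nv v * (v I0 * v I1)) = 0) by lra.
  assert (q02 : s * (/ nv v * (v I0 * v I2)) = 0) by lra.
  assert (q12 : s * (/ nv v * (v I1 * v I2)) = 0) by lra.
  apply prod0l in q01, q02, q12; auto. apply prod0l in q01, q02, q12; auto.
Qed.

Definition Q0 : Mat3 := mdiag (-1) 1 1.
Definition Q1 : Mat3 := mdiag 1 (-1) 1.
Definition P01 : Mat3 := fun i j => match i, j with I0, I1 | I1, I0 | I2, I2 => 1 | _, _ => 0 end.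
Definition P12 : Mat3 := fun i j => match i, j with I0, I0 | I1, I2 | I2, I1 => 1 | _, _ => 0 end.

Lemma Q0_orth : is_orth Q0. Proof. unfold is_orth, Q0; mext; mun; ring. Qed.
Lemma Q1_orth : is_orth Q1. Proof. unfold is_orth, Q1; mext; mun; ring. Qed.
Lemma P01_orth : is_orth P01. Proof. unfold is_orth, P01; mext; mun; ring. Qed.
Lemma P12_orth : is_orth P12. Proof. unfold is_orth, P12; mext; mun; ring. Qed.

Ltac entries E :=
  pose proof (f_equal (fun M => M I0 I0) E); pose proof (f_equal (fun M => M I0 I1) E);
  pose proof (f_equal (fun M => M I0 I2) E); pose proof (f_equal (fun M => M I1 I0) E);
  pose proof (f_equal (fun M => M I1 I1) E); pose proof (f_equal (fun M => M I1 I2) E);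
  pose proof (f_equal (fun M => M I2 I0) E); pose proof (f_equal (fun M => M I2 I1) E);
  pose proof (f_equal (fun M => M I2 I2) E).

Lemma psym_scal U c : is_psym U -> c > 0 -> is_psym (mmul U (mscal c)).
Proof.
  intros [Hs Hp] hc. split.
  - intros i j. destruct i, j; unfold mmul, mscal, sum3; simpl; rewrite ?(Hs I0 I1), ?(Hs I0 I2), ?(Hs I1 I2); ring.
  - intros x hx. specialize (Hp x hx).
    match goal with |- ?L > 0 => assert (E : L = c * sum3 (fun i => sum3 (fun j => x i * U i j * x j))) end.
    { unfold mmul, mscal, sum3; simpl; ring. }
    rewrite E. apply Rmult_lt_0_compat; lra.
Qed.

Lemma coax_scal U c : coaxial U (mscal c).
Proof. unfold coaxial; mext; mun; ring. Qed.
Lemma coax_diag a b c d e f : coaxial (mdiag a b c) (mdiag d e f).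
Proof. unfold coaxial; mext; mun; ring. Qed.

Lemma cancel T W V : Ax0_2 T -> Ax3 T -> is_psym W -> is_psym V -> coaxial W V ->
  T (mmul W V) = T V -> W = mid.
Proof.
  intros H2 H3 hW hV hc E. rewrite H3 in E by auto. apply H2; auto.
  apply functional_extensionality; intro i; apply functional_extensionality; intro j.
  pose proof (f_equal (fun M => M i j) E) as E'. simpl in E'. unfold madd, mzero in *. lra.
Qed.

Lemma psym_mid : is_psym mid.
Proof. rewrite mid_diag. apply psym_diag; lra. Qed.

Lemma ax2_part T : Ax0_2 T -> Ax0_3 T -> Ax3 T -> Ax2 T.
Proof.
  intros H2 H0 H3 l hl.
  assert (hp : is_psym (mscal l)) by (rewrite mscal_diag; apply psym_diag; lra).
  assert (E0 := iso T Q0 (mscal l) H0 Q0_orth hp ltac:(unfold Q0; mext; mun; ring)).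
  assert (E1 := iso T Q1 (mscal l) H0 Q1_orth hp ltac:(unfold Q1; mext; mun; ring)).
  assert (E2 := iso T P01 (mscal l) H0 P01_orth hp ltac:(unfold P01; mext; mun; ring)).
  assert (E3 := iso T P12 (mscal l) H0 P12_orth hp ltac:(unfold P12; mext; mun; ring)).
  remember (T (mscal l)) as X eqn:HXd.
  assert (HX : X = mscal (X I0 I0)).
  { entries E0; entries E1; entries E2; entries E3. unfold Q0, Q1, P01, P12 in *. mun.
    mext; lra. }
  exists (X I0 I0). intros U hU. split.
  - intro; subst U; rewrite <- HXd; exact HX.
  - intro HU.
    assert (hw : is_psym (mmul U (mscal (/ l)))) by (apply psym_scal; auto; apply Rinv_0_lt_compat; lra).
    assert (EW : mmul (mmul U (mscal (/ l))) (mscal l) = U).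
    { mext; mun; field; lra. }
    assert (W1 : mmul U (mscal (/ l)) = mid).
    { apply (cancel T _ (mscal l)); auto. apply coax_scal. rewrite EW, HU, <- HXd. symmetry; exact HX. }
    rewrite <- EW, W1, mmul_id_l. reflexivity.
Qed.

Lemma diag_T T a : Ax0_3 T -> a > 0 -> exists p q, T (mdiag a 1 1) = mdiag p q q.
Proof.
  intros H0 ha.
  assert (hp : is_psym (mdiag a 1 1)) by (apply psym_diag; lra).
  assert (E0 := iso T Q0 _ H0 Q0_orth hp ltac:(unfold Q0; mext; mun; ring)).
  assert (E1 := iso T Q1 _ H0 Q1_orth hp ltac:(unfold Q1; mext; mun; ring)).
  assert (E3 := iso T P12 _ H0 P12_orth hp ltac:(unfold P12; mext; mun; ring)).
  remember (T (mdiag a 1 1)) as X eqn:HXd.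
  exists (X I0 I0), (X I1 I1).
  entries E0; entries E1; entries E3. unfold Q0, Q1, P12 in *. mun.
  mext; lra.
Qed.

Lemma ax1_part T : Ax0_2 T -> Ax0_3 T -> Ax3 T -> Ax1 T.
Proof.
  intros H2 H0 H3 al hal.
  assert (hia : / al > 0) by (apply Rinv_0_lt_compat; lra).
  destruct (diag_T T al H0 hal) as [p [q HX]].
  destruct (diag_T T (/ al) H0 hia) as [p' [q' HY]].
  assert (hA : is_psym (mdiag al 1 1)) by (apply psym_diag; lra).
  assert (hAi : is_psym (mdiag (/ al) 1 1)) by (apply psym_diag; lra).
  assert (hB : is_psym (mdiag 1 (/ al) 1)) by (apply psym_diag; lra).
  set (D := mdiag al (/ al) 1).
  assert (hD : is_psym D) by (apply psym_diag; lra).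
  assert (EI : mmul (mdiag al 1 1) (mdiag (/ al) 1 1) = mid) by (mext; mun; field; lra).
  assert (TI : T mid = mzero) by (apply H2; [apply psym_mid | reflexivity]).
  assert (S : madd (T (mdiag al 1 1)) (T (mdiag (/ al) 1 1)) = mzero).
  { rewrite <- H3, EI; auto. apply coax_diag. }
  rewrite HX, HY in S.
  assert (pp : p + p' = 0 /\ q + q' = 0).
  { pose proof (f_equal (fun M => M I0 I0) S) as a1; pose proof (f_equal (fun M => M I1 I1) S) as a2;
    unfold madd, mdiag, mzero in a1, a2; simpl in a1, a2; lra. }
  assert (EB : mmul (mmul (mtr P01) (mdiag (/ al) 1 1)) P01 = mdiag 1 (/ al) 1) by (unfold P01; mext; mun; ring).
  assert (TB : T (mdiag 1 (/ al) 1) = mmul (mmul (mtr P01) (mdiag p' q' q')) P01).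
  { rewrite <- EB, H0; auto. rewrite HY; reflexivity. exact P01_orth. }
  assert (ED : mmul (mdiag al 1 1) (mdiag 1 (/ al) 1) = D) by (unfold D; mext; mun; ring).
  assert (TD : T D = mdiag (p - q) (- (p - q)) 0).
  { rewrite <- ED, H3; auto. 2: apply coax_diag. rewrite HX, TB. unfold P01; mext; mun; lra. }
  exists (p - q). intros U hU. split.
  - intro; subst U; exact TD.
  - intro HU. destruct (Req_dec (p - q) 0) as [z|nz].
    + rewrite z in HU, TD.
      assert (Z : mdiag 0 (-0) 0 = mzero) by (mext; mun; lra).
      rewrite Z in HU, TD.
      apply H2 in HU; auto. apply H2 in TD; auto. congruence.
    + assert (Ud := key T U (p - q) H0 hU HU nz).
      pose proof (psym_pos U I0 hU). pose proof (psym_pos U I1 hU). pose proof (psym_pos U I2 hU).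
      set (W := mdiag (U I0 I0 / al) (U I1 I1 * al) (U I2 I2)).
      assert (hW : is_psym W).
      { apply psym_diag; auto. unfold Rdiv; apply Rmult_lt_0_compat; lra. apply Rmult_lt_0_compat; lra. }
      assert (EW : mmul W D = U).
      { rewrite Ud. unfold W, D. mext; mun; field; lra. }
      assert (W1 : W = mid).
      { apply (cancel T W D); auto. apply coax_diag. rewrite EW, HU, TD. reflexivity. }
      rewrite <- EW, W1, mmul_id_l. reflexivity.
Qed.

Theorem mainTheorem8 (T : Mat3 -> Mat3) :
  maps_into_sym T -> Ax0_1 T -> Ax0_2 T -> Ax0_3 T -> Ax3 T -> Ax1 T /\ Ax2 T.
Proof.
  intros _ _ H2 H0 H3. split; [apply ax1_part | apply ax2_part]; auto.
Qed.
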